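(* The number of $\lfloor\sqrt n\rfloor$-bounded walks with $n$ steps is $\Omega(2^n/\sqrt n)$ as $n\to\infty$.
   Context: A ballot sequence is a 0-1 sequence in which every nonempty prefix contains strictly more 1's than 0's. A 0-1 sequence corresponds to a lattice walk starting at the origin, where each term $1$ is a step $(1,1)$ and each term $0$ is a step $(1,-1)$; a ballot walk is the walk of a ballot sequence. For a positive integer $b$, a $b$-bounded walk is a ballot walk that never visits a point with $y>2b$ and whose endpoint has $y>b$. *)

(* Defs.v *)
From HB Require Import structures.
From mathcomp Require Import all_boot all_order all_algebra.
From mathcomp Require Import reals.
Set Implicit Arguments. Unset Strict Implicit. Unset Printing Implicit Defensive.

(* A 0-1 sequence is a seq bool; true = 1 = step (1,1), false = 0 = step (1,-1).
   The y-coordinate after the prefix of length k is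
   (number of 1's) - (number of 0's) in [take k s]. *)
Definition ones (s : seq bool) : nat := count id s.
Definition zeros (s : seq bool) : nat := count negb s.

Definition ballot (s : seq bool) : bool :=
  [forall k : 'I_(size s).+1, (0 < k)%N ==> (zeros (take k s) < ones (take k s))%N].

(* b-bounded walk: ballot walk, never visits a point with y > 2b
   (i.e. every visited point, prefix of length 0..size s, has y <= 2b),
   and whose endpoint has y > b. *)
Definition bounded_walk (b : nat) (s : seq bool) : bool :=
  [&& ballot s,
      [forall k : 'I_(size s).+1, (ones (take k s) <= b.*2 + zeros (take k s))%N]
    & (b + zeros s < ones s)%N].

Definition isqrt (n : nat) : nat := \max_(b < n.+1 | (b * b <= n)%N) b.

Definition num_bounded_walks (n : nat) : nat :=
  #|[set t : n.-tuple bool | bounded_walk (isqrt n) t]|.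

(* Main.v *)
Require Import Defs.
From HB Require Import structures.
From mathcomp Require Import all_boot all_order all_algebra.
From mathcomp Require Import reals.
From mathcomp Require Import ring lra zify.
Set Implicit Arguments. Unset Strict Implicit. Unset Printing Implicit Defensive.

Fixpoint seqs (n : nat) : seq (seq bool) :=
  if n is n'.+1 then [seq true :: s | s <- seqs n'] ++ [seq false :: s | s <- seqs n']
  else [:: [::]].

Lemma mem_map_cons (y x : bool) s l :
  (x :: s \in map (cons y) l) = (x == y) && (s \in l).
Proof.
apply/mapP/andP => [[t Ht [-> ->]]|[/eqP -> Hs]]; first by rewrite eqxx.
by exists s.
Qed.

Lemma mem_seqs n s : (s \in seqs n) = (size s == n).
Proof.
elim: n s => [|n IH] [|x s] //=.
- by rewrite mem_cat; apply/negbTE/orP; case=> /mapP [t _ []].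
- by rewrite mem_cat !mem_map_cons IH eqSS; case: x => /=; rewrite ?orbF.
Qed.

Lemma uniq_seqs n : uniq (seqs n).
Proof.
elim: n => //= n IH.
rewrite cat_uniq !map_inj_uniq ?IH //=; try by move=> ? ? [].
rewrite andbT; apply/hasPn => t /mapP [u _ ->]; by rewrite mem_map_cons.
Qed.

Lemma card_tuples n (P : pred (seq bool)) :
  #|[set t : n.-tuple bool | P t]| = count P (seqs n).
Proof.
rewrite cardE /enum_mem size_filter -enumT.
rewrite (eq_count (a2 := fun t : n.-tuple bool => P (tval t))); last first.
  move=> t; exact: (in_set (fun t : n.-tuple bool => P t) t).
rewrite -(count_map (@tval n bool)).
apply/permP/uniq_perm; first by rewrite map_inj_uniq ?enum_uniq //; exact: val_inj.
  exact: uniq_seqs.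
move=> s; rewrite mem_seqs; apply/mapP/idP => [[t _ ->]|Hs]; first by rewrite size_tuple.
by exists (Tuple Hs); rewrite ?mem_enum.
Qed.

Fixpoint acc (b m : nat) (ph : bool) (y : nat) (s : seq bool) : bool :=
  match s with
  | [::] => ph
  | x :: s' => let y' := if x then y.+1 else y.-1 in
     if ph then (b < y') && (y' <= b.*2) && acc b m true y' s'
     else (x || (1 < y)) && (y' <= m) && acc b m (y' == m) y' s'
  end.

Definition C b m ph y L := count (acc b m ph y) (seqs L).

Lemma C_true b m y L : C b m true y L.+1 =
  (if (b < y.+1) && (y.+1 <= b.*2) then C b m true y.+1 L else 0) +
  (if (b < y.-1) && (y.-1 <= b.*2) then C b m true y.-1 L else 0).
Proof.
rewrite /C /= count_cat !count_map; congr (_ + _); case: ifP => H.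
- by apply: eq_count => s /=; rewrite H.
- by rewrite (eq_count (a2 := pred0)) ?count_pred0 // => s /=; rewrite H.
- by apply: eq_count => s /=; rewrite H.
- by rewrite (eq_count (a2 := pred0)) ?count_pred0 // => s /=; rewrite H.
Qed.

Lemma C_false b m y L : C b m false y L.+1 =
  (if y.+1 <= m then C b m (y.+1 == m) y.+1 L else 0) +
  (if (1 < y) && (y.-1 <= m) then C b m (y.-1 == m) y.-1 L else 0).
Proof.
rewrite /C /= count_cat !count_map; congr (_ + _); case: ifP => H.
- by apply: eq_count => s /=; rewrite H.
- by rewrite (eq_count (a2 := pred0)) ?count_pred0 // => s /=; rewrite H.
- by apply: eq_count => s /=; rewrite H.
- by rewrite (eq_count (a2 := pred0)) ?count_pred0 // => s /=; rewrite H.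
Qed.

Definition inv_prop b y (s : seq bool) :=
  (forall k, 0 < k <= size s -> zeros (take k s) < y + ones (take k s) /\
       y + ones (take k s) <= b.*2 + zeros (take k s)) /\ b + zeros s < y + ones s.

Lemma inv_step b (x : bool) y y' (s : seq bool) : (x -> y' = y.+1) -> (~~ x -> y' = y.-1 /\ 0 < y) ->
  0 < y' -> y' <= b.*2 -> inv_prop b y' s -> inv_prop b y (x :: s).
Proof.
move=> Hx Hnx H1 H2 [IH1 IH2].
have Hc : (x /\ y' = y.+1) \/ (~~ x /\ y' = y.-1 /\ 0 < y).
  by case: x Hx Hnx => /= Hx Hnx; [left; split => //; apply: Hx | right; split => //; apply: Hnx].
split.
  case=> // [[|k]] /= Hk.
    rewrite /ones /zeros /= ?take0; case: Hc => [[-> Hy']|[/negbTE -> [Hy' Hy]]] /=; lia.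
  have := IH1 k.+1; rewrite /ones /zeros /= in Hk * => IH1'.
  have := IH1' Hk; case: Hc {IH1'} => [[-> Hy']|[/negbTE -> [Hy' Hy]]] /=; lia.
move: IH2; rewrite /ones /zeros /=; case: Hc => [[-> Hy']|[/negbTE -> [Hy' Hy]]] /=; lia.
Qed.

Lemma acc_inv b m ph y s : b < m -> m <= b.*2 -> acc b m ph y s -> (ph -> b < y <= b.*2) ->
  inv_prop b y s.
Proof.
move=> Hbm Hm; elim: s ph y => [|x s IH] ph y /=.
  move=> -> /(_ isT) /andP [H1 _]; split => [k /andP [Hk1 Hk2]|]; first by move: Hk2 => /=; lia.
  by rewrite /ones /zeros /=; lia.
case: ph => [/andP [/andP [H1 H2] Hacc] Hph|/andP [/andP [H1 H2] Hacc] _].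
- apply: (inv_step (y' := if x then y.+1 else y.-1)) => //.
  + by move=> ->.
  + move=> /negbTE Hx; rewrite Hx /= in H1 *; split=> //.
    by case: y H1 {Hph Hacc H2}.
  + exact: leq_ltn_trans (leq0n b) H1.
  + by apply: IH Hacc _ => _; rewrite H1 H2.
- apply: (inv_step (y' := if x then y.+1 else y.-1)) => //.
  + by move=> ->.
  + by move=> /negbTE Hx; rewrite Hx /= in H1 *; split=> //; exact: ltnW.
  + by case: x H1 H2 Hacc => //= H1 H2 _; case: y H1 {H2}.
  + exact: leq_trans H2 Hm.
  + by apply: (IH _ _ Hacc) => /eqP Hym; rewrite Hym Hbm Hm.
Qed.

Lemma acc_bounded b m (s : seq bool) : b < m -> m <= b.*2 -> acc b m false 0 s ->
  bounded_walk b s.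
Proof.
move=> Hbm Hm Hacc; have [H1 H2] := acc_inv Hbm Hm Hacc (fun H => False_ind _ (notF H)).
apply/and3P; split => //.
- apply/forallP => k; apply/implyP => Hk.
  by have [] := H1 k; rewrite ?Hk -ltnS ?ltn_ord.
- apply/forallP => k; case: (posnP k) => [->|Hk]; first by rewrite take0.
  by have [] := H1 k; rewrite ?Hk -ltnS ?ltn_ord.
Qed.

Lemma num_ge n b m : b = isqrt n -> b < m -> m <= b.*2 ->
  C b m false 0 n <= num_bounded_walks n.
Proof.
move=> Hb Hbm Hm; rewrite /num_bounded_walks -Hb /C -card_tuples.
apply: subset_leq_card; apply/subsetP => t; rewrite !inE; exact: acc_bounded.
Qed.

Lemma isqrt_sq n : isqrt n * isqrt n <= n.
Proof.
rewrite /isqrt; apply: (big_ind (fun x => x * x <= n)) => //.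
- by move=> x y Hx Hy; rewrite /maxn; case: ifP.
Qed.

Lemma isqrt_lt n : n < (isqrt n).+1 * (isqrt n).+1.
Proof.
rewrite ltnNge; apply/negP => H.
have Hb : (isqrt n).+1 < n.+1 by rewrite ltnS; apply: leq_trans H; exact: leq_pmulr.
have := @leq_bigmax_cond _ (fun i : 'I_n.+1 => i * i <= n) (fun i => nat_of_ord i) (Ordinal Hb) H.
by rewrite -/(isqrt n) /= ltnn.
Qed.

Import Order.TTheory GRing.Theory Num.Theory.
Local Open Scope ring_scope.

Definition Pop (R : realFieldType) (m : nat) (f : nat -> R) (y : nat) : R :=
  if (y == 0)%N || (m <= y)%N then 2 * f y else f y.+1 + f y.-1.

Definition Pit (R : realFieldType) m t (f : nat -> R) := iter t (Pop m) f.

Lemma Pit_lin (R : realFieldType) m (a c : R) (f g h : nat -> R) :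
  (forall z, h z = a * f z + c * g z) ->
  forall t y, Pit m t h y = a * Pit m t f y + c * Pit m t g y.
Proof.
move=> Hh; elim=> [|t IH] y /=; first exact: Hh.
rewrite /Pop; case: ifP => _; rewrite !IH; ring.
Qed.

Lemma Pit_mono (R : realFieldType) m (f g : nat -> R) :
  (forall z, f z <= g z) -> forall t y, Pit m t f y <= Pit m t g y.
Proof.
move=> Hfg; elim=> [|t IH] y /=; first exact: Hfg.
rewrite /Pop; case: ifP => _; last by rewrite lerD.
by rewrite ler_pM2l ?IH.
Qed.

Lemma Pit_absorb (R : realFieldType) m (f : nat -> R) t y :
  ((y == 0)%N || (m <= y)%N) -> Pit m t f y = 2 ^+ t * f y.
Proof.
move=> Hy; elim: t => [|t IH] /=; first by rewrite mul1r.
by rewrite /Pop Hy -/(Pit m t f) IH exprS mulrA.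
Qed.

Lemma Pit_S (R : realFieldType) m (f : nat -> R) t y :
  Pit m t.+1 f y = Pit m t (Pop m f) y.
Proof. by rewrite /Pit iterSr. Qed.

Lemma Pit_int (R : realFieldType) m (f : nat -> R) t y :
  (0 < y < m)%N -> Pit m t.+1 f y = Pit m t f y.+1 + Pit m t f y.-1.
Proof.
move=> /andP [H1 H2]; rewrite /Pit iterS /Pop.
by rewrite (negbTE (lt0n_neq0 H1)) leqNgt H2.
Qed.

Definition Tf (R : realFieldType) m (z : nat) : R := if (m <= z)%N then 1 else 0.
Definition If (R : realFieldType) m (z : nat) : R := if (z < m)%N then z%:R else 0.
Definition Jf (R : realFieldType) m (z : nat) : R := (minn z m)%:R.
Definition wf (R : realFieldType) m (z : nat) : R :=
  if (z <= m)%N then z%:R * (m%:R ^+ 2 - z%:R ^+ 2) else 0.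

Lemma J_dec (R : realFieldType) m z : Jf R m z = m%:R * Tf R m z + 1 * If R m z.
Proof.
rewrite /Jf /Tf /If /minn; case: leqP => H.
  by rewrite mulr1 mul1r addr0.
by rewrite mulr0 mul1r add0r.
Qed.

Lemma PJ (R : realFieldType) m z : (0 < m)%N -> Pop m (Jf R m) z = 2 * Jf R m z.
Proof.
move=> Hm; rewrite /Pop; case: ifP => // /norP [Hz Hmz].
rewrite -ltnNge in Hmz; rewrite /Jf /minn Hmz.
have -> : (z.-1 < m)%N by apply: leq_ltn_trans (leq_pred _) Hmz.
have -> : (if (z.+1 < m)%N then z.+1 else m) = z.+1.
  by case: ifP => // /negbT; rewrite -leqNgt => H; apply/eqP; rewrite eqn_leq H Hmz.
case: z Hz Hmz => // z _ _; rewrite /= -!natr1; ring.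
Qed.

Lemma PI (R : realFieldType) m z : Pop m (If R m) z <= 2 * If R m z.
Proof.
rewrite /Pop; case: ifP => // /norP [Hz Hmz].
rewrite -ltnNge in Hmz; rewrite /If Hmz.
have -> : (z.-1 < m)%N by apply: leq_ltn_trans (leq_pred _) Hmz.
case: z Hz Hmz => // z _ Hmz /=.
have Hz0 := ler0n R z; case: ifP => _; rewrite -!natr1 ?mulr0n; lra.
Qed.

Lemma Pw (R : realFieldType) m z : Pop m (wf R m) z = 2 * wf R m z + (-6) * If R m z.
Proof.
rewrite /Pop /wf /If; case: ifP => [/orP [/eqP ->|Hmz]|/norP [Hz Hmz]].
- by rewrite leq0n if_same; ring.
- by rewrite ltnNge Hmz /=; ring.
rewrite -ltnNge in Hmz; rewrite Hmz (ltnW Hmz).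
have -> : (z.-1 <= m)%N by apply: leq_trans (leq_pred _) (ltnW Hmz).
case: z Hz Hmz => // z _ Hmz /=.
rewrite -!natr1; ring.
Qed.

Lemma Pit0 (R : realFieldType) m t y : Pit m t (fun _ => 0 : R) y = 0.
Proof.
rewrite (@Pit_lin R m 0 0 (fun _ => 0) (fun _ => 0)) ?mul0r ?addr0 // => z; ring.
Qed.

Lemma Pit_J (R : realFieldType) m t y : (0 < m)%N -> Pit m t (Jf R m) y = 2 ^+ t * Jf R m y.
Proof.
move=> Hm; elim: t y => [|t IH] y; first by rewrite /= mul1r.
rewrite Pit_S (@Pit_lin R m 2 0 (Jf R m) (Jf R m)); last by move=> z; rewrite PJ //; ring.
by rewrite IH exprS; ring.
Qed.

Lemma wf_ge0 (R : realFieldType) m z : 0 <= wf R m z.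
Proof.
rewrite /wf; case: ifP => // H.
have h1 : (z%:R : R) <= m%:R by rewrite ler_nat.
have h0 : (0 : R) <= z%:R := ler0n _ _.
have h2 : (z%:R : R) ^+ 2 <= m%:R ^+ 2 by rewrite lerXn2r // nnegrE.
by apply: mulr_ge0 => //; rewrite subr_ge0.
Qed.

Lemma U_bound (R : realFieldType) m t : (2 <= m)%N ->
  3 * t%:R * Pit m t (If R m) 1 <= 2 ^+ t * (m%:R ^+ 2 - 1) - Pit m t (wf R m) 1.
Proof.
move=> Hm; elim: t => [|t IH].
  rewrite /= /wf (leq_trans _ Hm) // expr0 expr1n; lra.
have HU : Pit m t.+1 (If R m) 1 <= 2 * Pit m t (If R m) 1.
  have HL := @Pit_lin R m 2 0 (If R m) (If R m) (fun z => 2 * If R m z) (fun z => ltac:(ring)) t 1.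
  rewrite mul0r addr0 in HL; rewrite -HL Pit_S; apply: Pit_mono => z; exact: PI.
have HE : Pit m t.+1 (wf R m) 1 = 2 * Pit m t (wf R m) 1 + (-6) * Pit m t (If R m) 1.
  by rewrite Pit_S (@Pit_lin R m 2 (-6) (wf R m) (If R m)) // => z; rewrite Pw.
rewrite HE exprS -natr1.
have Ht : (0 : R) <= t%:R := ler0n _ _.
nra.
Qed.

Lemma H_bound (R : realFieldType) m N : (2 <= m)%N ->
  3 * N%:R * (2 ^+ N - m%:R * Pit m N (Tf R m) 1) <= 2 ^+ N * (m%:R ^+ 2 - 1).
Proof.
move=> Hm.
have HJ := @Pit_J R m N 1 (ltnW Hm).
rewrite (@Pit_lin R m m%:R 1 (Tf R m) (If R m) (Jf R m)) in HJ; last by move=> z; exact: J_dec.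
rewrite (_ : Jf R m 1 = 1) in HJ; last by rewrite /Jf /minn Hm.
have HU := @U_bound R m N Hm.
have HE : 0 <= Pit m N (wf R m) 1 by rewrite -(Pit0 R m N 1); apply: Pit_mono => z; exact: wf_ge0.
have -> : 2 ^+ N - m%:R * Pit m N (Tf R m) 1 = Pit m N (If R m) 1 by rewrite mulr1 in HJ; rewrite -HJ; ring.
lra.
Qed.

Definition Wb (R : realFieldType) b : R := (b.+1)%:R.
Definition pp (R : realFieldType) b (u : R) := u * (Wb R b - u).
Definition poly (R : realFieldType) b (u : R) := pp b u * (pp b u + Wb R b ^+ 2).
Definition gg (R : realFieldType) b y : R :=
  if (b < y)%N && (y <= b.*2)%N then poly b ((y - b)%:R) else 0.
Definition lam (R : realFieldType) b : R := 2 - 12 / Wb R b ^+ 2.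
Definition FF (R : realFieldType) b : R := 5 * Wb R b ^+ 4 / 16.

Lemma Wb_gt0 (R : realFieldType) b : 0 < Wb R b.
Proof. by rewrite /Wb ltr0Sn. Qed.

Lemma gg_ext (R : realFieldType) b z : (b <= z <= b.*2.+1)%N -> gg R b z = poly b ((z - b)%:R).
Proof.
move=> /andP [H1 H2]; rewrite /gg; case: ifP => // /negbT.
rewrite negb_and -leqNgt -ltnNge => /orP [H|H].
  have -> : z = b by apply/eqP; rewrite eqn_leq H H1.
  by rewrite subnn /poly /pp; ring.
have -> : z = b.*2.+1 by apply/eqP; rewrite eqn_leq H H2.
have -> : (b.*2.+1 - b = b.+1)%N by rewrite -addnn; lia.
by rewrite /poly /pp /Wb; ring.
Qed.

Lemma poly_step (R : realFieldType) b u : 0 <= u <= Wb R b ->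
  lam R b * poly b u <= poly b (u + 1) + poly b (u - 1).
Proof.
move=> /andP [Hu0 HuW].
have Hid : poly b (u + 1) + poly b (u - 1) = 2 * poly b u + 2 - 12 * pp b u.
  by rewrite /poly /pp; ring.
have HW := Wb_gt0 R b.
have HW2 : Wb R b ^+ 2 != 0 by rewrite expf_neq0 // gt_eqF.
have Hp : 0 <= pp b u by rewrite /pp mulr_ge0 // subr_ge0.
have Hl : lam R b * poly b u = 2 * poly b u - 12 * pp b u - 12 * (pp b u ^+ 2 / Wb R b ^+ 2).
  by rewrite /lam /poly; field; rewrite nat1r pnatr_eq0.
have : 0 <= pp b u ^+ 2 / Wb R b ^+ 2 by rewrite divr_ge0 // exprn_ge0 // ltW.
move=> HX; rewrite Hid Hl; move: HX; set X := _ / _; set A := poly b u; set B := pp b u => HX; lra.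
Qed.

Lemma gg_step (R : realFieldType) b y : (b < y <= b.*2)%N ->
  lam R b * gg R b y <= gg R b y.+1 + gg R b y.-1.
Proof.
move=> /andP [H1 H2].
rewrite (@gg_ext R b y) ?(ltnW H1) ?(leq_trans H2) //.
rewrite (@gg_ext R b y.+1); last by apply/andP; split; lia.
rewrite (@gg_ext R b y.-1); last by apply/andP; split; lia.
have -> : (y.+1 - b = (y - b).+1)%N by lia.
have -> : (y.-1 - b = (y - b).-1)%N by lia.
have Hy : (0 < y - b)%N by lia.
have -> : ((y - b).-1%:R : R) = (y - b)%:R - 1.
  by rewrite -[in RHS](prednK Hy) -natr1 addrK.
rewrite -natr1; apply: poly_step; apply/andP; split; first exact: ler0n.
by rewrite /Wb ler_nat; lia.
Qed.

Lemma pp_bounds (R : realFieldType) b u : 0 <= u <= Wb R b ->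
  0 <= pp b u /\ pp b u <= Wb R b ^+ 2 / 4.
Proof.
move=> /andP [Hu0 HuW]; split; first by rewrite /pp mulr_ge0 // subr_ge0.
rewrite /pp; have := sqr_ge0 (u - Wb R b / 2); lra.
Qed.

Lemma gg_bounds (R : realFieldType) b z : 0 <= gg R b z <= FF R b.
Proof.
rewrite /gg; case: ifP => [/andP [H1 H2]|_]; last first.
  by rewrite lexx /FF divr_ge0 // mulr_ge0 // exprn_ge0 // ltW // Wb_gt0.
have Hu : 0 <= ((z - b)%:R : R) <= Wb R b by rewrite ler0n /Wb ler_nat; lia.
have [hp0 hp1] := pp_bounds Hu.
have HW := Wb_gt0 R b.
rewrite /poly /FF; move: hp0 hp1 HW; move: (pp b _) (Wb R b) => p W hp0 hp1 HW.
have h2 : 0 <= p + W ^+ 2 by rewrite addr_ge0 // exprn_ge0 // ltW.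
apply/andP; split; first exact: mulr_ge0.
have : p * (p + W ^+ 2) <= W ^+ 2 / 4 * (W ^+ 2 / 4 + W ^+ 2).
  by apply: ler_pM => //; lra.
have E : 5 * W ^+ 4 / 16 = W ^+ 2 / 4 * (W ^+ 2 / 4 + W ^+ 2) by field.
by rewrite E.
Qed.

Lemma lam_ge0 (R : realFieldType) b : (2 <= b)%N -> 0 <= lam R b.
Proof.
move=> Hb; rewrite /lam subr_ge0 ler_pdivrMr ?exprn_gt0 ?Wb_gt0 //.
have : (3 : R) <= Wb R b by rewrite /Wb ler_nat; lia.
move=> H3; nra.
Qed.

Lemma phase2 (R : realFieldType) b m L y : (2 <= b)%N ->
  lam R b ^+ L * gg R b y <= FF R b * (C b m true y L)%:R.
Proof.
move=> Hb; elim: L y => [|L IH] y.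
  by rewrite /C /= expr0 mul1r mulr1; case/andP: (gg_bounds R b y).
have Hl := lam_ge0 R Hb.
have HF : 0 <= FF R b by case/andP: (gg_bounds R b y) => h1 h2; apply: le_trans h2.
have nb : forall z, lam R b ^+ L * gg R b z <=
    FF R b * (if (b < z)%N && (z <= b.*2)%N then C b m true z L else 0%N)%:R.
  move=> z; case: ifP => H; first exact: IH.
  by rewrite /gg H mulr0 mulr0.
rewrite C_true natrD mulrDr.
case: (boolP ((b < y)%N && (y <= b.*2)%N)) => Hy; last first.
  by rewrite /gg (negbTE Hy) mulr0 -mulrDr mulr_ge0 // addr_ge0.
rewrite exprSr -mulrA; apply: le_trans (lerD (nb y.+1) (nb y.-1)).
rewrite -mulrDr ler_wpM2l ?exprn_ge0 //; exact: gg_step.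
Qed.

Lemma bern (R : realFieldType) (x : R) k : 0 <= x <= 1 -> 1 - k%:R * x <= (1 - x) ^+ k.
Proof.
move=> /andP [h0 h1]; elim: k => [|k IH]; first by rewrite mul0r subr0 expr0.
rewrite exprSr -natr1.
have hp : 0 <= (1 - x) ^+ k by rewrite exprn_ge0 // subr_ge0.
have hk : (0 : R) <= k%:R := ler0n _ _.
have hkx : 0 <= k%:R * x ^+ 2 by rewrite mulr_ge0 // sqr_ge0.
nra.
Qed.

Lemma lam_pow (R : realFieldType) b L : (6 <= b)%N -> (L < (b.+1) ^ 2)%N ->
  2 ^+ L * (1/2) ^+ 16 <= lam R b ^+ L.
Proof.
move=> Hb HL.
set W := Wb R b.
have HW : 0 < W := Wb_gt0 R b.
have HW2 : 48 <= W ^+ 2.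
  have : (7 : R) <= W by rewrite /W /Wb ler_nat; lia.
  move=> h; nra.
set a := 6 / W ^+ 2.
have Hlam : lam R b = 2 * (1 - a).
  by rewrite /lam /a -/W; field; rewrite nat1r pnatr_eq0.
have Ha0 : 0 <= a by rewrite /a divr_ge0 // exprn_ge0 // ltW.
have Ha1 : a <= 1 by rewrite /a ler_pdivrMr ?exprn_gt0 //; lra.
set q := (((b.+1) ^ 2 %/ 16).+1)%N.
have Hq1 : (L <= q * 16)%N by apply: ltnW; apply: leq_trans HL _; apply: ltnW; exact: ltn_ceil.
have Hq2 : (q * 16 <= (b.+1) ^ 2 + 16)%N by rewrite /q mulSn addnC leq_add2r leq_divM.
have Hq2R : q%:R * 16 <= W ^+ 2 + 16.
  by rewrite /W /Wb -natrX (_ : (16 : R) = 16%:R) // -natrM -natrD ler_nat.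
have Hqa : q%:R * a <= 1/2.
  rewrite /a mulrA ler_pdivrMr ?exprn_gt0 //; lra.
have Hb1 : 1/2 <= (1 - a) ^+ q.
  apply: le_trans (bern q (introT andP (conj Ha0 Ha1))); lra.
have -> : lam R b ^+ L = 2 ^+ L * (1 - a) ^+ L by rewrite Hlam exprMn.
rewrite ler_pM2l ?exprn_gt0 //.
apply: (@le_trans _ _ ((1 - a) ^+ (q * 16))); last by apply: ler_wiXn2l => //; lra.
rewrite exprM ler_pXn2r // nnegrE ?exprn_ge0 //; lra.
Qed.

Definition mm b := (b + b./2 + 1)%N.

Lemma half_bounds b : ((b./2).*2 <= b <= (b./2).*2 + 1)%N.
Proof. have := odd_double_half b; case: (odd b) => /= <-; lia. Qed.

Lemma gg_mm (R : realFieldType) b : (2 <= b)%N -> Wb R b ^+ 4 / 8 <= gg R b (mm b).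
Proof.
move=> Hb; have [h1 h2] := andP (half_bounds b).
rewrite /gg /mm; have -> : (b < b + b./2 + 1)%N && (b + b./2 + 1 <= b.*2)%N by apply/andP; split; lia.
have -> : (b + b./2 + 1 - b = (b./2).+1)%N by lia.
set u : R := (b./2).+1%:R; set W := Wb R b.
have Hu1 : W <= 2 * u by rewrite /u /W /Wb -natrM ler_nat; lia.
have Hu2 : 2 * u <= W + 1 by rewrite /u /W /Wb -natrM natr1 ler_nat; lia.
have HW3 : 3 <= W by rewrite /W /Wb ler_nat; lia.
have Hp : W ^+ 2 / 8 <= pp b u.
  rewrite /pp -/W; nra.
rewrite /poly -/W.
have HW2 : 0 <= W ^+ 2 by rewrite sqr_ge0.
have E : W ^+ 4 / 8 = W ^+ 2 / 8 * W ^+ 2 by rewrite (_ : W ^+ 4 = W ^+ 2 * W ^+ 2) ?(@exprD _ _ 2 2) //; field.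
rewrite E; apply: ler_pM => //; first by rewrite divr_ge0.
lra.
Qed.

Lemma phase1 (R : realFieldType) b m N (k : R) : (2 <= m)%N ->
  (forall L, (L <= N)%N -> k * 2 ^+ L <= (C b m true m L)%:R) -> 0 <= k ->
  forall L y, (L <= N)%N -> (0 < y < m)%N ->
    k * Pit m L (Tf R m) y <= (C b m false y L)%:R.
Proof.
move=> Hm HC Hk; elim=> [|L IH] y HL /andP [Hy1 Hy2].
  by rewrite /= /Tf leqNgt Hy2 mulr0 ler0n.
rewrite Pit_int ?Hy1 ?Hy2 // C_false natrD mulrDr; apply: lerD.
- rewrite Hy2; case: (eqVneq y.+1 m) => [E|E].
    rewrite E Pit_absorb ?leqnn ?orbT // /Tf leqnn mulr1; exact: HC (ltnW HL).
  apply: IH (ltnW HL) _.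
  by rewrite /= ltn_neqAle E Hy2.
- case: (ltnP 1 y) => Hy.
    have Hym : (y.-1 < m)%N by apply: leq_ltn_trans (leq_pred _) Hy2.
    rewrite (ltnW Hym) (ltn_eqF Hym); apply: IH (ltnW HL) _.
    by apply/andP; split; lia.
  have -> : y = 1%N by lia.
  by rewrite Pit_absorb //= /Tf leqNgt (leq_trans _ Hm) // mulr0 mulr0.
Qed.

Lemma Pit_ge0 (R : realFieldType) m t y : 0 <= Pit m t (Tf R m) y.
Proof.
rewrite -(Pit0 R m t y); apply: Pit_mono => z; rewrite /Tf; case: ifP => _ //.
Qed.

Unset Implicit Arguments.

Theorem lemma12 (R : realType) :
  exists2 c : R, 0 < c &
    exists N : nat, forall n : nat, (N <= n)%N ->
      c * (2 ^+ n / Num.sqrt (n%:R)) <= (num_bounded_walks n)%:R.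
Proof.
pose k : R := 2 / 5 * (1 / 2) ^+ 16.
have Hk : 0 < k by rewrite /k; apply: mulr_gt0; [lra|apply: exprn_gt0; lra].
exists (k / 32); first by rewrite divr_gt0.
exists 100%N => n Hn.
have Hb1 := isqrt_sq n; have Hb2 := isqrt_lt n.
set b := isqrt n in Hb1 Hb2 *.
have Hb10 : (10 <= b)%N by nia.
have [hh1 hh2] := andP (half_bounds b).
have Hb2' : (2 <= b)%N by lia.
have Hb6 : (6 <= b)%N by lia.
set m := mm b.
have Hbm : (b < m)%N by rewrite /m /mm; lia.
have Hm2b : (m <= b.*2)%N by rewrite /m /mm; lia.
have Hm2 : (2 <= m)%N by rewrite /m /mm; lia.
have H2m : (2 * m <= 3 * b + 2)%N by rewrite /m /mm; lia.
have HnN : n = (n.-1).+1 by lia.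
set N := n.-1 in HnN.
have HN : (b * b <= N.+1 /\ N.+1 < b.+1 * b.+1)%N by rewrite -HnN.
have HC2 : forall L, (L <= N)%N -> k * 2 ^+ L <= (C b m true m L)%:R.
  move=> L HL.
  have Hp2 := @phase2 R b m L m Hb2'.
  have Hgm := @gg_mm R b Hb2'.
  have Hlp := @lam_pow R b L Hb6 ltac:(rewrite -mulnn; lia).
  have Hl0 := lam_ge0 R Hb2'.
  have HW := Wb_gt0 R b.
  move: Hp2 Hgm Hlp Hl0; rewrite /FF /m.
  move: (lam R b ^+ L) (gg R b (mm b)) (Wb R b) HW => l g W HW Hp2 Hgm Hlp Hl0.
  have HX : 0 < W ^+ 4 by rewrite exprn_gt0.
  have Hp0 : 0 <= 2 ^+ L * (1 / 2) ^+ 16 :> R by apply: mulr_ge0; apply: exprn_ge0; lra.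
  have h1 : 2 ^+ L * (1 / 2) ^+ 16 * (W ^+ 4 / 8) <= l * g.
    by apply: ler_pM => //; rewrite divr_ge0 // ltW.
  move: (W ^+ 4) HX h1 Hp2 => X HX h1 Hp2.
  move: (2 ^+ L) Hp0 h1 => T Hp0 h1.
  rewrite /k; nra.
have Hph1 := @phase1 R b m N k Hm2 HC2 (ltW Hk) N 1 (leqnn N) ltac:(rewrite /=; lia).
have Hcnt : C b m false 0 n = C b m false 1 N.
  rewrite HnN C_false /= (ltnW Hm2).
  have -> : (1 == m) = false by apply/negbTE; rewrite neq_ltn Hm2.
  by rewrite addn0.
have Hnum := @num_ge n b m erefl Hbm Hm2b.
rewrite Hcnt in Hnum.
have HH := @H_bound R m N Hm2.
have Hmn : 8 * (m%:R ^+ 2 - 1) <= 21 * (N%:R : R).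
  have : (8 * (m ^ 2) <= 21 * N + 8)%N by nia.
  rewrite -(ler_nat R) natrD natrM natrX natrM; lra.
have HN0 : (0 : R) < N%:R by rewrite ltr0n; lia.
have HP0 := @Pit_ge0 R m N 1.
move: HH HP0 Hph1; set P := Pit m N (Tf R m) 1 => HH HP0 Hph1.
have HT : (0 : R) < 2 ^+ N by rewrite exprn_gt0.
have HQ : 2 ^+ N / 8 <= m%:R * P.
  move: (2 ^+ N) (m%:R * P) HT HH => T Q HT HH.
  have : T * (m%:R ^+ 2 - 1) <= T * (21 * N%:R / 8) by apply: ler_wpM2l; [exact: ltW|lra].
  nra.
set s := Num.sqrt (n%:R : R).
have Hs : 0 < s by rewrite sqrtr_gt0 ltr0n; lia.
have HbS : (b%:R : R) <= s.
  rewrite -(ger0_norm (ler0n R b)) -sqrtr_sqr; apply: ler_wsqrtr.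
  by rewrite -natrX ler_nat; lia.
have HmS : (m%:R : R) <= 2 * s.
  apply: le_trans (_ : 2 * b%:R <= _); last by lra.
  have h : (m%:R : R) <= (2 * b)%N%:R by rewrite ler_nat; lia.
  by rewrite natrM in h.
have HPs : 2 ^+ N / 8 <= P * (2 * s).
  apply: (le_trans HQ); rewrite mulrC; exact: ler_wpM2l.
have Hnum' : ((C b m false 1 N)%:R : R) <= (num_bounded_walks n)%:R by rewrite ler_nat.
apply: (le_trans _ Hnum').
apply: (le_trans _ (_ : k * P <= _)); last by apply: (le_trans Hph1).
rewrite HnN exprS.
have -> : k / 32 * (2 * 2 ^+ N / s) = k * (2 ^+ N / (16 * s)) by field; rewrite gt_eqF.
rewrite ler_pM2l // ler_pdivrMr ?mulr_gt0 //.
lra.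
Qed.
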